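(* Let $(n_i)_{i\ge1}$ be positive integers and let $(k^{(E)}_i)$, $(k^{(F)}_i)$ be sequences of positive integers such that $\lim_{i\to\infty}\prod_{j\ge0}\frac{n_{i+j}}{n_{i+j}+k^{(E)}_{i+j}}=1$, $\lim_{i\to\infty}\prod_{j\ge0}\frac{n_{i+j}}{n_{i+j}+k^{(F)}_{i+j}}=1$, $\prod_{i\ge1}(n_i+k^{(E)}_i)=\prod_{i\ge1}(n_i+k^{(F)}_i)$ as supernatural numbers, and $\lim_{i\to\infty}\frac{(n_1+k^{(E)}_1)\cdots(n_i+k^{(E)}_i)}{(n_1+k^{(F)}_1)\cdots(n_i+k^{(F)}_i)}=1$. Then $(k^{(E)}_i)$ and $(k^{(F)}_i)$ are sufficiently close.
   Context: Definition (sufficiently close). Sequences $(k^{(E)}_i)$ and $(k^{(F)}_i)$ (relative to $(n_i)$) are sufficiently close if for every $\delta>0$ and every $N$: (i) there exist $i_1>i'_1\ge N$ such that $1-\prod_{j\ge0}\frac{n_{i'_1+j}}{n_{i'_1+j}+k^{(E)}_{i'_1+j}}<\delta$, $\prod_{i=1}^{i'_1-1}(n_i+k^{(E)}_i)$ divides $\prod_{i=1}^{i_1-1}(n_i+k^{(F)}_i)$, and $$\frac{(n_1+k^{(F)}_1)\cdots(n_{i'_1-1}+k^{(F)}_{i'_1-1})}{(n_1+k^{(E)}_1)\cdots(n_{i'_1-1}+k^{(E)}_{i'_1-1})}\cdot\frac{(n_{i'_1}+k^{(F)}_{i'_1})\cdots(n_{i_1-1}+k^{(F)}_{i_1-1})}{n_{i'_1}\cdots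 n_{i_1-1}}>1;$$ and (ii) the same holds with the roles of $E$ and $F$ interchanged (for some $i_2>i'_2\ge N$). *)

(* Defs.v *)
From HB Require Import structures.
From mathcomp Require Import all_boot all_order all_algebra.
From mathcomp Require Import all_classical all_reals all_analysis.
Set Implicit Arguments. Unset Strict Implicit. Unset Printing Implicit Defensive.
Import Order.TTheory GRing.Theory Num.Theory.
Import numFieldNormedType.Exports.
Local Open Scope ring_scope.

(* Sequences are nat -> nat, only indices >= 1 are used (the paper indexes from 1). *)

Definition tail_partial (R : realType) (n k : nat -> nat) (i m : nat) : R :=
  \prod_(i <= j < m) ((n j)%:R / (n j + k j)%:R).

(* Infinite product  prod_{j >= 0} n_{i+j} / (n_{i+j} + k_{i+j}),
   the limit of the (nonincreasing, nonnegative) partial products. *)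
Definition tail_prod (R : realType) (n k : nat -> nat) (i : nat) : R :=
  limn (tail_partial R n k i).

Definition pprod (a : nat -> nat) (m : nat) : nat := (\prod_(1 <= i < m) a i)%N.

(* The supernatural number prod_{i>=1} a_i: d divides it iff d divides a finite
   partial product. Two supernatural numbers are equal iff for every prime p
   they have the same p-exponent, i.e. for every e, p^e divides one iff it
   divides the other. *)
Definition supernat_dvd (d : nat) (a : nat -> nat) : Prop := exists m, (d %| pprod a m)%N.

Definition supernat_eq (a b : nat -> nat) : Prop :=
  forall p e : nat, prime p -> (supernat_dvd (p ^ e) a <-> supernat_dvd (p ^ e) b).

Definition suff_close_half (R : realType) (n kE kF : nat -> nat) : Prop :=
  forall (delta : R), 0 < delta -> forall N : nat,
  exists i1 i1' : nat,
    [/\ (N <= i1')%N && (1 <= i1')%N, (i1' < i1)%N,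
        1 - tail_prod R n kE i1' < delta,
        (pprod (fun i => n i + kE i) i1' %| pprod (fun i => n i + kF i) i1)%N
      & (1 : R) < ((pprod (fun i => n i + kF i) i1')%:R / (pprod (fun i => n i + kE i) i1')%:R)
            * ((\prod_(i1' <= i < i1) (n i + kF i))%N%:R / (\prod_(i1' <= i < i1) n i)%N%:R)].

Definition sufficiently_close (R : realType) (n kE kF : nat -> nat) : Prop :=
  suff_close_half R n kE kF /\ suff_close_half R n kF kE.

(* Main.v *)
Require Import Defs.
From HB Require Import structures.
From mathcomp Require Import all_boot all_order all_algebra.
From mathcomp Require Import all_classical all_reals all_analysis.
From mathcomp Require Import zify ring lra.
Import Order.TTheory GRing.Theory Num.Theory.
Import numFieldNormedType.Exports.
Local Open Scope classical_set_scope.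
Local Open Scope ring_scope.

Lemma pprod_dvd (a : nat -> nat) m m' : (m <= m')%N -> (pprod a m %| pprod a m')%N.
Proof.
case: m => [|m] le.
  by rewrite /pprod big_geq // dvd1n.
by rewrite /pprod [X in (_ %| X)%N](big_cat_nat _ (n:=m.+1)) //=; apply: dvdn_mulr.
Qed.

Lemma prod_pos (F : nat -> nat) m0 m :
  (forall i, (m0 <= i)%N -> (0 < F i)%N) -> (0 < \prod_(m0 <= i < m) F i)%N.
Proof.
move=> h; rewrite big_nat_cond; apply: (big_ind (fun x => 0 < x)%N) => //.
  by move=> x y; rewrite muln_gt0 => -> ->.
by move=> i /andP[/andP[hi _] _]; apply: h.
Qed.

Lemma seq_max (P : nat -> nat -> Prop) (s : seq nat) :
  (forall p m m', (m <= m')%N -> P p m -> P p m') ->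
  (forall p, p \in s -> exists m, P p m) ->
  exists M, forall p, p \in s -> P p M.
Proof.
move=> mono; elim: s => [|x s IH] h.
  by exists 0%N.
have [m1 Hm1] := h x (mem_head _ _).
have [M HM] : exists M, forall p, p \in s -> P p M.
  by apply: IH => p ps; apply: h; rewrite inE ps orbT.
exists (maxn m1 M) => p; rewrite inE => /orP[/eqP->|ps].
  by apply: mono Hm1; rewrite leq_maxl.
by apply: mono (HM p ps); rewrite leq_maxr.
Qed.

Lemma half (R : realType) (n kE kF : nat -> nat) :
  (forall i, (1 <= i)%N -> (0 < n i)%N) ->
  (forall i, (1 <= i)%N -> (0 < kE i)%N) ->
  tail_prod R n kE i @[i --> \oo] --> (1 : R) ->
  (forall p e, prime p -> supernat_dvd (p ^ e) (fun i => n i + kE i)%N ->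
     supernat_dvd (p ^ e) (fun i => n i + kF i)%N) ->
  (forall x y, (0 < y)%N -> (y < x)%N -> exists M, forall i, (M <= i)%N ->
     (pprod (fun j => n j + kE j) i.+1 * y < x * pprod (fun j => n j + kF j) i.+1)%N) ->
  suff_close_half R n kE kF.
Proof.
move=> hn hk ht hs hr delta dpos N.
move/cvgrPdist_lt: ht => /(_ delta dpos) [N0 _ HN0].
set a := (fun j => n j + kE j)%N.
set b := (fun j => n j + kF j)%N.
pose i1' := maxn (maxn N N0) 1.
have i1'ge1 : (1 <= i1')%N by rewrite leq_maxr.
have Apos : (0 < pprod a i1')%N.
  by apply: prod_pos => i hi; rewrite /a addn_gt0 hn.
have [M HM] : exists M, forall m, (M <= m)%N -> (pprod a i1' %| pprod b m)%N.
  have hex : forall p, p \in primes (pprod a i1') ->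
      exists m, ((pprod a i1')`_p %| pprod b m)%N.
    move=> p pp; move: (pp); rewrite mem_primes => /and3P[prp _ _].
    have : supernat_dvd (p ^ logn p (pprod a i1')) a.
      by exists i1'; rewrite -p_part dvdn_part.
    by move/(hs _ _ prp) => [m Hm]; exists m; rewrite p_part.
  have [M HM] := @seq_max (fun p m => (pprod a i1')`_p %| pprod b m)%N
     (primes (pprod a i1'))
     (fun p m m' le h => dvdn_trans h (@pprod_dvd b _ _ le)) hex.
  exists M => m Mm; apply/(dvdn_partP _ Apos) => p pp.
  exact: dvdn_trans (HM p pp) (@pprod_dvd b _ _ Mm).
have ltna : (n i1' < a i1')%N by rewrite /a -addn1 leq_add2l hk.
have [M1 HM1] := hr (a i1') (n i1') (hn _ i1'ge1) ltna.
pose i1 := (maxn (maxn M M1) i1').+1.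
exists i1, i1'; split.
- apply/andP; split => //; rewrite /i1'; lia.
- rewrite /i1; lia.
- have := HN0 i1'; rewrite /= => /(_ ltac:(rewrite /i1'; lia)).
  by apply: le_lt_trans; apply: ler_norm.
- apply: HM; rewrite /i1; lia.
have lt1 : (i1' < i1)%N by rewrite /i1; lia.
have Hr := HM1 (maxn (maxn M M1) i1') ltac:(lia).
rewrite -/i1 in Hr.
set Pa := (\prod_(i1' <= i < i1) a i)%N.
set Pb := (\prod_(i1' <= i < i1) b i)%N.
set Pn := (\prod_(i1' <= i < i1) n i)%N.
have eA : pprod a i1 = (pprod a i1' * Pa)%N.
  by rewrite /pprod (big_cat_nat _ (n:=i1')) // ltnW.
have eB : pprod b i1 = (pprod b i1' * Pb)%N.
  by rewrite /pprod (big_cat_nat _ (n:=i1')) // ltnW.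
have Pnpos : (0 < Pn)%N.
  by apply: prod_pos => i hi; apply: hn; apply: leq_trans hi.
have key : (a i1' * Pn <= Pa * n i1')%N.
  have hR : (\prod_(i1'.+1 <= i < i1) n i <= \prod_(i1'.+1 <= i < i1) a i)%N.
    by apply: leq_prod => i _; apply: leq_addr.
  rewrite /Pa /Pn (@big_ltn _ _ _ _ _ _ lt1) (@big_ltn _ _ _ _ _ _ lt1).
  move: hR; clear.
  move: (\prod_(i1'.+1 <= i < i1) n i) (\prod_(i1'.+1 <= i < i1) a i) (a i1') (n i1') => X Y U V h.
  by rewrite -[(U * Y * V)%N]mulnA [(Y * V)%N]mulnC leq_mul2l leq_mul2l h !orbT.
have main : (pprod a i1' * Pn < pprod b i1' * Pb)%N.
  rewrite -eB.
  have h1 : (pprod a i1 * n i1' * Pn < a i1' * pprod b i1 * Pn)%N.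
    by rewrite ltn_pmul2r.
  have h2 : (a i1' * pprod b i1 * Pn <= Pa * n i1' * pprod b i1)%N.
    move: key; clear; move: (a i1') (pprod b i1) Pn Pa (n i1') => A' Y P U W k.
    by rewrite [(A' * Y * P)%N]mulnAC leq_mul2r k orbT.
  have h3 := leq_trans h1 h2.
  rewrite eA in h3.
  have npos : (0 < n i1')%N := hn _ i1'ge1.
  have Papos : (0 < Pa)%N.
    by apply: prod_pos => i hi; rewrite /a addn_gt0 hn //; apply: leq_trans hi.
  have pn : (0 < Pa * n i1')%N by rewrite muln_gt0 Papos npos.
  rewrite -(ltn_pmul2r pn).
  move: h3; clear.
  move: (pprod a i1') (pprod b i1) Pa Pn (n i1') => X Y U V W.
  have -> : (X * U * W * V = X * V * (U * W))%N by ring.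
  by rewrite [(U * W * Y)%N]mulnC.
rewrite mulf_div -!natrM ltr_pdivlMr ?mul1r ?ltr_nat //.
by rewrite ltr0n muln_gt0 Apos Pnpos.
Qed.

Theorem lemma4p8 (R : realType) (n kE kF : nat -> nat) :
  (forall i, (1 <= i)%N -> (0 < n i)%N) ->
  (forall i, (1 <= i)%N -> (0 < kE i)%N) ->
  (forall i, (1 <= i)%N -> (0 < kF i)%N) ->
  tail_prod R n kE i @[i --> \oo] --> (1 : R) ->
  tail_prod R n kF i @[i --> \oo] --> (1 : R) ->
  supernat_eq (fun i => n i + kE i)%N (fun i => n i + kF i)%N ->
  ((pprod (fun j => n j + kE j) i.+1)%:R / (pprod (fun j => n j + kF j) i.+1)%:R : R)
     @[i --> \oo] --> (1 : R) ->
  sufficiently_close R n kE kF.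
Proof.
move=> hn hkE hkF htE htF hs hr.
have Ap : forall m, (0 < pprod (fun j => n j + kE j) m)%N.
  by move=> m; apply: prod_pos => i hi; rewrite addn_gt0 hn.
have Bp : forall m, (0 < pprod (fun j => n j + kF j) m)%N.
  by move=> m; apply: prod_pos => i hi; rewrite addn_gt0 hn.
split.
- apply: half => //.
    by move=> p e pp; move/(hs p e pp).
  move=> x y y0 yx.
  have ypos : (0 : R) < y%:R by rewrite ltr0n.
  have eps0 : (0 : R) < x%:R / y%:R - 1.
    by rewrite subr_gt0 ltr_pdivlMr // mul1r ltr_nat.
  move/cvgrPdist_lt: hr => /(_ _ eps0) [M _ HM].
  exists M => i Mi.
  have := HM i Mi; rewrite /= distrC => h.
  have h' := ler_norm (((pprod (fun j => n j + kE j) i.+1)%:R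
     / (pprod (fun j => n j + kF j) i.+1)%:R : R) - 1).
  have : ((pprod (fun j => n j + kE j) i.+1)%:R
     / (pprod (fun j => n j + kF j) i.+1)%:R : R) < x%:R / y%:R by lra.
  rewrite ltr_pdivrMr ?ltr0n // mulrAC ltr_pdivlMr // -!natrM ltr_nat.
  by rewrite mulnC.
- apply: half => //.
    by move=> p e pp; move/(hs p e pp).
  move=> x y y0 yx.
  have xpos : (0 : R) < x%:R by rewrite ltr0n; apply: leq_trans yx.
  have eps0 : (0 : R) < 1 - y%:R / x%:R.
    by rewrite subr_gt0 ltr_pdivrMr // mul1r ltr_nat.
  move/cvgrPdist_lt: hr => /(_ _ eps0) [M _ HM].
  exists M => i Mi.
  have := HM i Mi; rewrite /= => h.
  have h' := ler_norm (1 - ((pprod (fun j => n j + kE j) i.+1)%:R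
     / (pprod (fun j => n j + kF j) i.+1)%:R : R)).
  have : y%:R / x%:R < ((pprod (fun j => n j + kE j) i.+1)%:R
     / (pprod (fun j => n j + kF j) i.+1)%:R : R) by lra.
  rewrite ltr_pdivlMr ?ltr0n // mulrAC ltr_pdivrMr // -!natrM ltr_nat.
  by rewrite mulnC [(x * _)%N]mulnC.
Qed.
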